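(* Let $n\geq 3$, $x_n=2\cos(\pi/n)$, and let $c$ be a real number with $c\leq 1$ and $c\leq x_n^2-2$. Then there is a real $y_c$ with $y_c\geq 2$ and $y_c\geq x_n^2-1$ such that $\lambda(x_n,y_c)=c$ and $\alpha(x_n,y_c)<0$.
   Context: $\lambda(x,y)=9x^2-12x^4+4x^6-5y+10x^2y+2x^4y-4x^6y-11x^2y^2+8x^4y^2+x^6y^2+5y^3-4x^2y^3-3x^4y^3+3x^2y^4-y^5$ and $\alpha(x,y)=1-4x^2+2x^4+2y-x^2y-x^4y-y^2+2x^2y^2-y^3$. *)

(* Defs.v *)
From Stdlib Require Import Reals.
Open Scope R_scope.

Definition lambda (x y : R) : R :=
  9*x^2 - 12*x^4 + 4*x^6 - 5*y + 10*x^2*y + 2*x^4*y - 4*x^6*y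
  - 11*x^2*y^2 + 8*x^4*y^2 + x^6*y^2 + 5*y^3 - 4*x^2*y^3 - 3*x^4*y^3
  + 3*x^2*y^4 - y^5.

Definition alpha (x y : R) : R :=
  1 - 4*x^2 + 2*x^4 + 2*y - x^2*y - x^4*y - y^2 + 2*x^2*y^2 - y^3.

Definition xn (n : nat) : R := 2 * cos (PI / INR n).

(* Main.v *)
Require Import Defs.
From Stdlib Require Import Reals Lra Psatz.
Open Scope R_scope.

Definition Lt (t y : R) : R :=
  9*t - 12*t^2 + 4*t^3 - 5*y + 10*t*y + 2*t^2*y - 4*t^3*y
  - 11*t*y^2 + 8*t^2*y^2 + t^3*y^2 + 5*y^3 - 4*t*y^3 - 3*t^2*y^3
  + 3*t*y^4 - y^5.
Definition At (t y : R) : R :=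
  1 - 4*t + 2*t^2 + 2*y - t*y - t^2*y - y^2 + 2*t*y^2 - y^3.

Lemma lamT x y : lambda x y = Lt (x^2) y.
Proof. unfold lambda, Lt; ring. Qed.
Lemma alpT x y : alpha x y = At (x^2) y.
Proof. unfold alpha, At; ring. Qed.

Lemma L1 t s : 1 <= t <= 3 -> 0 <= s -> Lt t (2+s) <= (t - 2) - s.
Proof.
  intros [H1 H3] Hs.
  assert (E : Lt t (2+s) - ((t-2) - s) =
    s*(-24+14*t-2*t^2) + s^2*(-50+37*t-10*t^2+t^3) + s^3*(-35+20*t-3*t^2)
    + s^4*(-10+3*t) - s^5) by (unfold Lt; ring).
  assert (a1 : -24+14*t-2*t^2 <= 0) by nra.
  assert (a2 : -50+37*t-10*t^2+t^3 <= 0).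
  { assert (0 < t^2-7*t+16) by nra.
    assert ((t-3)*(t^2-7*t+16) <= 0) by nra. nra. }
  assert (a3 : -35+20*t-3*t^2 <= 0) by nra.
  assert (0 <= s^2) by nra. assert (0 <= s^3) by (apply pow_le; lra).
  assert (0 <= s^4) by (apply pow_le; lra). assert (0 <= s^5) by (apply pow_le; lra).
  assert (s*(-24+14*t-2*t^2) <= 0) by nra.
  assert (s^2*(-50+37*t-10*t^2+t^3) <= 0) by nra.
  assert (s^3*(-35+20*t-3*t^2) <= 0) by nra.
  assert (s^4*(-10+3*t) <= 0) by nra.
  lra.
Qed.

Lemma L2 t s : 3 <= t <= 4 -> 0 <= s -> Lt t (t-1+s) <= 1 - s.
Proof.
  intros [H1 H3] Hs.
  assert (E : Lt t (t-1+s) - (1 - s) =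
    s*(6-2*t) + s^2*(-5+4*t-t^2) + s^3*(-5+4*t-t^2)
    + s^4*(5-2*t) - s^5) by (unfold Lt; ring).
  assert (a2 : -5+4*t-t^2 <= 0) by nra.
  assert (0 <= s^2) by nra. assert (0 <= s^3) by (apply pow_le; lra).
  assert (0 <= s^4) by (apply pow_le; lra). assert (0 <= s^5) by (apply pow_le; lra).
  assert (s*(6-2*t) <= 0) by nra.
  assert (s^2*(-5+4*t-t^2) <= 0) by nra.
  assert (s^3*(-5+4*t-t^2) <= 0) by nra.
  assert (s^4*(5-2*t) <= 0) by nra.
  lra.
Qed.

Lemma A1 t s : 1 <= t <= 3 -> 0 <= s -> At t (2+s) < 0.
Proof.
  intros [H1 H3] Hs.
  assert (E : At t (2+s) =
    (-7+2*t) + s*(-14+7*t-t^2) + s^2*(-7+2*t) - s^3) by (unfold At; ring).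
  assert (-14+7*t-t^2 <= 0) by nra.
  assert (0 <= s^2) by nra. assert (0 <= s^3) by (apply pow_le; lra).
  assert (s*(-14+7*t-t^2) <= 0) by nra.
  assert (s^2*(-7+2*t) <= 0) by nra.
  lra.
Qed.

Lemma A2 t s : 3 <= t <= 4 -> 0 <= s -> At t (t-1+s) < 0.
Proof.
  intros [H1 H3] Hs.
  assert (E : At t (t-1+s) =
    -1 + s*(1-t) + s^2*(2-t) - s^3) by (unfold At; ring).
  assert (0 <= s^2) by nra. assert (0 <= s^3) by (apply pow_le; lra).
  assert (s*(1-t) <= 0) by nra.
  assert (s^2*(2-t) <= 0) by nra.
  lra.
Qed.

Lemma xn_bounds n : (3 <= n)%nat -> 1 <= xn n <= 2.
Proof.
  intro Hn. unfold xn.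
  assert (Hn' : 3 <= INR n) by (replace 3 with (INR 3) by (simpl; lra); apply le_INR; lia).
  assert (HP := PI_RGT_0).
  assert (h1 : 0 < PI / INR n) by (apply Rdiv_lt_0_compat; lra).
  assert (h2 : PI / INR n <= PI / 3).
  { unfold Rdiv. apply Rmult_le_compat_l; [lra|]. apply Rinv_le_contravar; lra. }
  assert (cos (PI/3) <= cos (PI / INR n)).
  { destruct (Req_dec (PI / INR n) (PI/3)) as [e|ne]; [rewrite e; lra|].
    left. apply cos_decreasing_1; lra. }
  rewrite cos_PI3 in H. pose proof (COS_bound (PI / INR n)). lra.
Qed.

Lemma main_t x c : 1 <= x^2 <= 4 -> c <= 1 -> c <= x^2 - 2 ->
  exists yc, 2 <= yc /\ x^2 - 1 <= yc /\ lambda x yc = c /\ alpha x yc < 0.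
Proof.
  intros Ht Hc1 Hc2.
  set (t := x^2) in *.
  set (f := fun y => lambda x y - c).
  assert (Hf : continuity f) by (unfold f, lambda; reg).
  destruct (Rle_lt_dec t 3) as [Hle|Hgt].
  - assert (Hs : 0 <= (t-2) - c) by lra.
    assert (Hfa : f 2 >= 0).
    { unfold f. rewrite lamT. fold t. replace (Lt t 2) with (t-2) by (unfold Lt; ring). lra. }
    assert (Hfb : f (2 + ((t-2)-c)) <= 0).
    { unfold f. rewrite lamT. fold t. pose proof (L1 t ((t-2)-c) ltac:(lra) Hs). lra. }
    destruct (IVT_cor f 2 (2 + ((t-2)-c)) Hf ltac:(lra)) as [z [Hz Hfz]].
    { nra. }
    exists z. unfold f in Hfz. repeat split; try lra.
    rewrite alpT. fold t. replace z with (2 + (z-2)) by ring. apply A1; lra.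
  - assert (Hs : 0 <= 1 - c) by lra.
    assert (Hfa : f (t-1) >= 0).
    { unfold f. rewrite lamT. fold t. pose proof (L2 t 0 ltac:(lra) ltac:(lra)).
      replace (t-1+0) with (t-1) in H by ring. 
      assert (Lt t (t-1) = 1) by (unfold Lt; ring). lra. }
    assert (Hfb : f (t-1 + (1-c)) <= 0).
    { unfold f. rewrite lamT. fold t. pose proof (L2 t (1-c) ltac:(lra) Hs). lra. }
    destruct (IVT_cor f (t-1) (t-1 + (1-c)) Hf ltac:(lra)) as [z [Hz Hfz]].
    { nra. }
    exists z. unfold f in Hfz. repeat split; try lra.
    rewrite alpT. fold t. replace z with (t-1 + (z-(t-1))) by ring. apply A2; lra.
Qed.

Theorem proposition6p9 (n : nat) (c : R) :
  (3 <= n)%nat ->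
  c <= 1 ->
  c <= (xn n)^2 - 2 ->
  exists yc : R,
    2 <= yc /\ (xn n)^2 - 1 <= yc /\
    lambda (xn n) yc = c /\ alpha (xn n) yc < 0.
Proof.
  intros Hn Hc1 Hc2. apply main_t; auto.
  pose proof (xn_bounds n Hn). nra.
Qed.
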